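(* For every set $q$ of operations on a set $\Omega$, $\mathrm{Sim}(q)$ is a full monoid, i.e. it is closed under relational composition and converses, contains $\approx_{\mathrm{Sim}(q)}$, and is closed under subsimilarities.
   Context: A similarity on $\Omega$ is a relation $\pi\subseteq\Omega\times\Omega$ such that every $a$ has some $b$ with $a\pi b$ and every $b$ has some $a$ with $a\pi b$; $\bar a\,\pi\,\bar b$ means coordinatewise relatedness; for $R,S\subseteq\Omega^k$, $R\,\pi\,S$ means $\bar a\pi\bar b$ implies ($\bar a\in R\iff\bar b\in S$). A set of operations is a set of finitary relations and quantifiers (subsets of $\mathcal P(\Omega^{k_1})\times\cdots\times\mathcal P(\Omega^{k_l})$) on $\Omega$; $\mathscr L^-_{\infty\infty}(q)$ is the equality-free infinitary logic with predicate and Lindström quantifier symbols for members of $q$. $a\sim_q b$ iff for all formulas $\phi(x,\bar y)$ of $\mathscr L^-_{\infty\infty}(q)$ and tuples $\bar c$ from $\Omega$, $\phi(a,\bar c)\iff\phi(b,\bar c)$. A relation is invariant under a similarity or equivalence relation $\rho$ if $\bar a\rho\bar b$ implies $\bar a\in R\iff\bar b\in R$; a quantifier $Q$ is $\sim$-invariant under $\pi$ if for all $\bar R,\bar S$ of its type with every component invariant under $\sim$ and $R_i\,\pi\,S_i$: $\bar R\in Q\iff\bar S\in Q$. $\mathrm{Sim}(q)$ is the set of similarities under which every relation of $q$ is invariant and every quantifier of $q$ is $\sim_q$-invariant. For a set $\Pi$ of similarities, $a\approx_\Pi b$ iff for every finite $k$ and $\bar c\in\Omega^k$ there is $\pi\in\Pi$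 with $(a,\bar c)\,\pi\,(b,\bar c)$. A subsimilarity of $\pi$ is a similarity $\pi'\subseteq\pi$. *)

(* Defs.v *)
From Stdlib Require Import List.
From mathcomp Require Import all_boot.
Set Implicit Arguments. Unset Strict Implicit. Unset Printing Implicit Defensive.

Section Ops.
Variable Omega : Type.

Definition tup (k : nat) := 'I_k -> Omega.

(* the type P(Omega^k1) x ... x P(Omega^kl) of a quantifier of type ks = [k1;..;kl] *)
Definition qarg (ks : seq nat) := forall i : 'I_(size ks), tup (nth 0 ks i) -> Prop.

Record ops := Ops {
  rel_idx : Type;
  rel_ar  : rel_idx -> nat;
  rel_int : forall r : rel_idx, tup (rel_ar r) -> Prop;
  qf_idx  : Type;
  qf_ty   : qf_idx -> seq nat;
  qf_int  : forall Q : qf_idx, qarg (qf_ty Q) -> Prop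
}.

(* Syntax of equality-free L^-_{infty infty}(q) over a variable type V:
   atoms R(x1..xk), negation, arbitrary conjunctions, existential
   quantification over an arbitrary set W of variables, and Lindström
   quantifiers Q xbar_1 .. xbar_l (phi_1, .., phi_l) with xbar_i tuples of
   distinct variables. *)
Inductive form (q : ops) (V : Type) : Type :=
| FRel (r : rel_idx q) (args : 'I_(rel_ar r) -> V)
| FNeg (phi : form q V)
| FAnd (I : Type) (phis : I -> form q V)
| FEx (W : V -> Prop) (phi : form q V)
| FQ (Q : qf_idx q)
     (xs : forall i : 'I_(size (qf_ty Q)), 'I_(nth 0 (qf_ty Q) i) -> V)
     (xs_inj : forall i, injective (xs i))
     (phis : 'I_(size (qf_ty Q)) -> form q V).

Arguments FRel {q V} r args.
Arguments FNeg {q V} phi.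
Arguments FAnd {q V} I phis.
Arguments FEx {q V} W phi.
Arguments FQ {q V} Q xs xs_inj phis.

Fixpoint sat (q : ops) (V : Type) (phi : form q V) : (V -> Omega) -> Prop :=
  match phi with
  | FRel r args => fun s => @rel_int q r (fun j => s (args j))
  | FNeg phi => fun s => ~ sat phi s
  | FAnd J phis => fun s => forall i, sat (phis i) s
  | FEx W phi => fun s =>
      exists s' : V -> Omega, (forall v, ~ W v -> s' v = s v) /\ sat phi s'
  | FQ Q xs _ phis => fun s =>
      @qf_int q Q (fun i (a : tup (nth 0 (qf_ty Q) i)) =>
        exists s' : V -> Omega,
          (forall v, (forall j, xs i j <> v) -> s' v = s v) /\
          (forall j, s' (xs i j) = a j) /\ sat (phis i) s')
  end.

Fixpoint free (q : ops) (V : Type) (phi : form q V) : V -> Prop :=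
  match phi with
  | FRel r args => fun v => exists j, args j = v
  | FNeg phi => free phi
  | FAnd J phis => fun v => exists i, free (phis i) v
  | FEx W phi => fun v => free phi v /\ ~ W v
  | FQ Q xs _ phis => fun v => exists i, free (phis i) v /\ forall j, xs i j <> v
  end.

(* a ~_q b : for every formula phi(x, ybar) (free variables among x and the
   finitely many ybar) and every valuation of ybar (i.e. tuple cbar),
   phi(a, cbar) <-> phi(b, cbar). *)
Definition simq (q : ops) (a b : Omega) : Prop :=
  forall (V : Type) (phi : form q V) (x : V) (ys : list V),
    (forall v, free phi v -> v = x \/ List.In v ys) ->
    forall s s' : V -> Omega, s x = a -> s' x = b ->
      (forall v, v <> x -> s v = s' v) ->
      (sat phi s <-> sat phi s').

Definition similarity (pi : Omega -> Omega -> Prop) : Prop :=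
  (forall a, exists b, pi a b) /\ (forall b, exists a, pi a b).

Definition tuprel (pi : Omega -> Omega -> Prop) (k : nat) (a b : tup k) : Prop :=
  forall j, pi (a j) (b j).

Definition relrel (pi : Omega -> Omega -> Prop) (k : nat) (R S : tup k -> Prop) : Prop :=
  forall a b, tuprel pi a b -> (R a <-> S b).

Definition invariant (rho : Omega -> Omega -> Prop) (k : nat) (R : tup k -> Prop) : Prop :=
  relrel rho R R.

Definition qinvariant (sim pi : Omega -> Omega -> Prop) (ks : seq nat)
    (Q : qarg ks -> Prop) : Prop :=
  forall R S : qarg ks,
    (forall i, invariant sim (R i)) -> (forall i, invariant sim (S i)) ->
    (forall i, relrel pi (R i) (S i)) ->
    (Q R <-> Q S).

Definition Sim (q : ops) (pi : Omega -> Omega -> Prop) : Prop :=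
  similarity pi /\
  (forall r : rel_idx q, invariant pi (@rel_int q r)) /\
  (forall Q : qf_idx q, qinvariant (simq q) pi (@qf_int q Q)).

Definition approx (Pi : (Omega -> Omega -> Prop) -> Prop) (a b : Omega) : Prop :=
  forall (k : nat) (c : tup k), exists pi, Pi pi /\ pi a b /\ tuprel pi c c.

Definition rcomp (pi rho : Omega -> Omega -> Prop) (a c : Omega) : Prop :=
  exists b, pi a b /\ rho b c.

Definition rconv (pi : Omega -> Omega -> Prop) (a b : Omega) : Prop := pi b a.

Definition full_monoid (Pi : (Omega -> Omega -> Prop) -> Prop) : Prop :=
  (forall pi rho, Pi pi -> Pi rho -> Pi (rcomp pi rho)) /\
  (forall pi, Pi pi -> Pi (rconv pi)) /\
  Pi (approx Pi) /\
  (forall pi pi', Pi pi -> similarity pi' ->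
     (forall a b, pi' a b -> pi a b) -> Pi pi').

End Ops.

(* Main.v *)
Require Import Defs.
From mathcomp Require Import all_boot.
From Stdlib Require Import Classical ClassicalEpsilon FunctionalExtensionality PropExtensionality.

Set Implicit Arguments. Unset Strict Implicit. Unset Printing Implicit Defensive.
Section S.
Variable Omega : Type.
Variable q : ops Omega.

Lemma choice_fun (P : Omega -> Omega -> Prop) :
  (forall a, exists b, P a b) -> exists f, forall a, P a (f a).
Proof.
intro H. exists (fun a => proj1_sig (constructive_indefinite_description _ (H a))).
intro a. exact (proj2_sig (constructive_indefinite_description _ (H a))).
Qed.

Definition upd (V : Type) n (xs : 'I_n -> V) (b : 'I_n -> Omega) (s : V -> Omega) (v : V) : Omega :=
  match excluded_middle_informative (exists j, xs j = v) with
  | left H => b (proj1_sig (constructive_indefinite_description _ H))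
  | right _ => s v end.

Lemma upd_in V n xs b s (inj : injective xs) (j : 'I_n) : @upd V n xs b s (xs j) = b j.
Proof.
unfold upd. destruct (excluded_middle_informative _) as [H|H].
- destruct (constructive_indefinite_description _ H) as [j' Hj']. simpl.
  apply inj in Hj'. now subst.
- exfalso; apply H; eauto.
Qed.

Lemma upd_out V n xs b s v : (forall j, xs j <> v) -> @upd V n xs b s v = s v.
Proof.
intro H. unfold upd. destruct (excluded_middle_informative _) as [[j Hj]|_].
- exfalso; exact (H j Hj).
- reflexivity.
Qed.

Definition Rdef (V : Type) (phi : form q V) n (xs : 'I_n -> V) (s : V -> Omega)
  (a : 'I_n -> Omega) : Prop :=
  exists s', (forall v, (forall j, xs j <> v) -> s' v = s v) /\
             (forall j, s' (xs j) = a j) /\ sat phi s'.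

Lemma Rdef_rel V (phi : form q V) n (xs : 'I_n -> V) (inj : injective xs)
  (P : V -> Omega -> Omega -> Prop) s s' a b :
  (forall t t', (forall v, P v (t v) (t' v)) -> sat phi t -> sat phi t') ->
  (forall v, (forall j, xs j <> v) -> P v (s v) (s' v)) ->
  (forall j, P (xs j) (a j) (b j)) -> Rdef phi xs s a -> Rdef phi xs s' b.
Proof.
intros T Hs Hab [s1 [H1 [H2 H3]]].
exists (upd xs b s'). split; [intros v Hv; now apply upd_out|].
split; [intro j; now apply upd_in|].
apply (T s1); [|exact H3]. intro v.
destruct (classic (exists j, xs j = v)) as [[j <-]|Hn].
- rewrite H2 upd_in //.
- assert (Hn' : forall j, xs j <> v) by (intros j E; apply Hn; eauto).
  rewrite H1 // upd_out //. apply Hs; auto.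
Qed.

Lemma qext (Q : qf_idx q) (R S : qarg Omega (qf_ty Q)) :
  (forall i a, R i a <-> S i a) -> (qf_int R <-> qf_int S).
Proof.
intro H. assert (E : R = S).
{ apply functional_extensionality_dep; intro i; apply functional_extensionality; intro a;
  apply propositional_extensionality; apply H. }
now rewrite E.
Qed.

Lemma simq_refl a : simq q a a.
Proof.
intros V phi x ys _ s s' Hs Hs' Hag.
assert (E : s = s').
{ apply functional_extensionality; intro v. destruct (classic (v = x)) as [->|n].
  - congruence.
  - auto. }
now subst.
Qed.

Lemma simq_sym a b : simq q a b -> simq q b a.
Proof.
intros H V phi x ys Hf s s' Hs Hs' Hag. symmetry.
apply (H V phi x ys Hf s' s Hs' Hs). intros v n; symmetry; auto.
Qed.

Lemma In_mem (T : eqType) (x : T) (s : seq T) : x \in s -> List.In x s.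
Proof.
elim: s => [//|y s IH]. rewrite in_cons => /orP [/eqP ->|H]; [left|right]; auto.
Qed.

Definition tset k (a : tup Omega k) (j : 'I_k) (b0 : Omega) : tup Omega k :=
  fun l => if l == j then b0 else a l.

Lemma chain k (R : tup Omega k -> Prop) (E : Omega -> Omega -> Prop) :
  (forall a j b0, E (a j) b0 -> (R a <-> R (tset a j b0))) ->
  forall a b, tuprel E a b -> (R a <-> R b).
Proof.
intros Hstep a b Hab.
pose c := fun m (l : 'I_k) => if (l < m)%N then b l else a l.
assert (Hm : forall m, R a <-> R (c m)).
{ elim => [|m IH].
  - assert (E0 : c 0 = a) by (apply functional_extensionality; intro l; reflexivity).
    rewrite E0; reflexivity.
  - case: (ltnP m k) => Hmk.
    + pose j := Ordinal Hmk.
      assert (E1 : c m.+1 = tset (c m) j (b j)).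
      { apply functional_extensionality; intro l. rewrite /c /tset.
        case: eqP => [->|Hne] /=; first by rewrite ltnSn.
        rewrite ltnS leq_eqVlt.
        have -> : (nat_of_ord l == m) = false.
        { apply/eqP => El. apply: Hne. apply: val_inj. exact El. }
        by []. }
      rewrite E1. etransitivity; [exact IH|]. apply Hstep.
      rewrite /c /= ltnn. apply Hab.
    + assert (E1 : c m.+1 = c m).
      { apply functional_extensionality; intro l. rewrite /c.
        have h1 : (l < m.+1)%N by apply: leq_trans (ltn_ord l) _; apply: leq_trans Hmk _.
        have h2 : (l < m)%N by apply: leq_trans (ltn_ord l) _.
        by rewrite h1 h2. }
      by rewrite E1. }
assert (Ek : c k = b).
{ apply functional_extensionality; intro l. by rewrite /c ltn_ord. }
rewrite -Ek. apply Hm.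
Qed.

Lemma rel_simq (r : rel_idx q) (a b : tup Omega (rel_ar r)) :
  tuprel (simq q) a b -> (rel_int a <-> rel_int b).
Proof.
apply chain. intros a0 j b0 H.
apply (H 'I_(rel_ar r) (@FRel Omega q _ r (fun l => l)) j (enum 'I_(rel_ar r))).
- intros v _. right. apply In_mem. by rewrite mem_enum.
- reflexivity.
- by rewrite /tset eqxx.
- intros v n. rewrite /tset. case: eqP => //.
Qed.

Lemma Inv V (phi : form q V) : forall s s', (forall v, simq q (s v) (s' v)) ->
  (sat phi s <-> sat phi s').
Proof.
induction phi as [r args|phi IH|I phis IH|W phi IH|Q xs inj phis IH]; intros s s' H.
- simpl. apply rel_simq. intro j. apply H.
- simpl. split; intros H1 H2; apply H1; apply (IH s s' H); exact H2.
- simpl. split; intros H1 i; apply (IH i s s' H); auto.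
- simpl. split.
  + intros [s1 [H1 H2]].
    exists (fun v => if excluded_middle_informative (W v) then s1 v else s' v). split.
    * intros v nW. destruct (excluded_middle_informative (W v)); [contradiction|reflexivity].
    * apply (IH s1 _); [|exact H2]. intro v.
      destruct (excluded_middle_informative (W v)); [apply simq_refl|].
      rewrite H1 //; apply H.
  + intros [s1 [H1 H2]].
    exists (fun v => if excluded_middle_informative (W v) then s1 v else s v). split.
    * intros v nW. destruct (excluded_middle_informative (W v)); [contradiction|reflexivity].
    * apply (IH _ s1); [|exact H2]. intro v.
      destruct (excluded_middle_informative (W v)); [apply simq_refl|].
      rewrite H1 //; apply H.
- change (qf_int (fun i a => Rdef (phis i) (xs i) s a) <->
          qf_int (fun i a => Rdef (phis i) (xs i) s' a)).
  apply qext. intros i a. split.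
  + apply (@Rdef_rel _ _ _ _ (inj i) (fun _ x y => simq q x y)).
    * intros t t' Ht. apply (IH i t t' Ht).
    * intros v _; apply H.
    * intro j; apply simq_refl.
  + apply (@Rdef_rel _ _ _ _ (inj i) (fun _ x y => simq q y x)).
    * intros t t' Ht. apply (IH i t' t Ht).
    * intros v _; apply H.
    * intro j; apply simq_refl.
Qed.

Lemma Rdef_inv V (phi : form q V) n (xs : 'I_n -> V) (inj : injective xs) (s : V -> Omega) :
  @Defs.invariant Omega (simq q) n (fun a => Rdef phi xs s a).
Proof.
intros a b Hab. split.
- apply (@Rdef_rel _ _ _ _ (inj) (fun _ x y => simq q x y)).
  + intros t t' Ht. apply (@Inv _ phi t t' Ht).
  + intros v _; apply simq_refl.
  + exact Hab.
- apply (@Rdef_rel _ _ _ _ (inj) (fun _ x y => simq q y x)).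
  + intros t t' Ht. apply (@Inv _ phi t' t Ht).
  + intros v _; apply simq_refl.
  + exact Hab.
Qed.

Lemma FP pi (Hpi : Sim q pi) V (phi : form q V) : forall s s', (forall v, pi (s v) (s' v)) ->
  (sat phi s <-> sat phi s').
Proof.
destruct Hpi as [[Hl Hr] [Hrel HQ]].
destruct (choice_fun Hl) as [f Hf].
destruct (choice_fun (P := fun b a => pi a b) Hr) as [g Hg].
induction phi as [r args|phi IH|I phis IH|W phi IH|Q xs inj phis IH]; intros s s' H.
- simpl. apply (Hrel r). intro j. apply H.
- simpl. split; intros H1 H2; apply H1; apply (IH s s' H); exact H2.
- simpl. split; intros H1 i; apply (IH i s s' H); auto.
- simpl. split.
  + intros [s1 [H1 H2]].
    exists (fun v => if excluded_middle_informative (W v) then f (s1 v) else s' v). split.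
    * intros v nW. destruct (excluded_middle_informative (W v)); [contradiction|reflexivity].
    * apply (IH s1 _); [|exact H2]. intro v.
      destruct (excluded_middle_informative (W v)); [apply Hf|].
      rewrite H1 //; apply H.
  + intros [s1 [H1 H2]].
    exists (fun v => if excluded_middle_informative (W v) then g (s1 v) else s v). split.
    * intros v nW. destruct (excluded_middle_informative (W v)); [contradiction|reflexivity].
    * apply (IH _ s1); [|exact H2]. intro v.
      destruct (excluded_middle_informative (W v)); [apply Hg|].
      rewrite H1 //; apply H.
- change (qf_int (fun i a => Rdef (phis i) (xs i) s a) <->
          qf_int (fun i a => Rdef (phis i) (xs i) s' a)).
  apply HQ.
  + intro i. apply Rdef_inv, inj.
  + intro i. apply Rdef_inv, inj.
  + intros i a b Hab. split.
    * apply (@Rdef_rel _ _ _ _ (inj i) (fun _ x y => pi x y)).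
      -- intros t t' Ht. apply (IH i t t' Ht).
      -- intros v _; apply H.
      -- exact Hab.
    * apply (@Rdef_rel _ _ _ _ (inj i) (fun _ x y => pi y x)).
      -- intros t t' Ht. apply (IH i t' t Ht).
      -- intros v _; apply H.
      -- exact Hab.
Qed.

Lemma FV V (phi : form q V) : forall s s', (forall v, free phi v -> s v = s' v) ->
  (sat phi s <-> sat phi s').
Proof.
induction phi as [r args|phi IH|I phis IH|W phi IH|Q xs inj phis IH]; intros s s' H.
- simpl. assert (E : (fun j => s (args j)) = (fun j => s' (args j))).
  { apply functional_extensionality; intro j. apply H. simpl. eauto. }
  rewrite E. reflexivity.
- simpl. split; intros H1 H2; apply H1; apply (IH s s' H); exact H2.
- simpl. split; intros H1 i; apply (IH i s s'); auto; intros v Hv; apply H; simpl; eauto.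
- simpl. split.
  + intros [s1 [H1 H2]].
    exists (fun v => if excluded_middle_informative (W v) then s1 v else s' v). split.
    * intros v nW. destruct (excluded_middle_informative (W v)); [contradiction|reflexivity].
    * apply (IH s1 _); [|exact H2]. intros v Hv.
      destruct (excluded_middle_informative (W v)); [reflexivity|].
      rewrite H1 //; apply H. simpl; auto.
  + intros [s1 [H1 H2]].
    exists (fun v => if excluded_middle_informative (W v) then s1 v else s v). split.
    * intros v nW. destruct (excluded_middle_informative (W v)); [contradiction|reflexivity].
    * apply (IH _ s1); [|exact H2]. intros v Hv.
      destruct (excluded_middle_informative (W v)); [reflexivity|].
      rewrite H1 //=. apply H. simpl; auto.
- change (qf_int (fun i a => Rdef (phis i) (xs i) s a) <->
          qf_int (fun i a => Rdef (phis i) (xs i) s' a)).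
  apply qext. intros i a. split.
  + apply (@Rdef_rel _ _ _ _ (inj i) (fun v x y => free (phis i) v -> x = y)).
    * intros t t' Ht. apply (IH i t t' Ht).
    * intros v Hn Hf; apply H. simpl. eauto.
    * intros j _; reflexivity.
  + apply (@Rdef_rel _ _ _ _ (inj i) (fun v x y => free (phis i) v -> y = x)).
    * intros t t' Ht. apply (IH i t' t Ht).
    * intros v Hn Hf; apply H. simpl. eauto.
    * intros j _; reflexivity.
Qed.

Lemma claimB pi a b a' b' : Sim q pi -> pi a b -> pi a' b' -> simq q b b' -> simq q a a'.
Proof.
intros Hpi Hab Hab' Hbb V phi x ys _ s s' Hs Hs' Hag.
destruct (choice_fun (proj1 (proj1 Hpi))) as [f Hf].
pose t := fun v => if excluded_middle_informative (v = x) then b else f (s v).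
pose t' := fun v => if excluded_middle_informative (v = x) then b' else f (s v).
etransitivity; [apply (@FP _ Hpi _ phi s t)|].
{ intro v. rewrite /t. destruct (excluded_middle_informative (v = x)) as [->|n].
  - rewrite Hs; exact Hab.
  - apply Hf. }
etransitivity; [apply (@Inv _ phi t t')|].
{ intro v. rewrite /t /t'. destruct (excluded_middle_informative (v = x)).
  - exact Hbb.
  - apply simq_refl. }
symmetry. apply (@FP _ Hpi _ phi s' t').
intro v. rewrite /t'. destruct (excluded_middle_informative (v = x)) as [->|n].
- rewrite Hs'; exact Hab'.
- rewrite -(Hag v n). apply Hf.
Qed.

Lemma In_nth' (T : Type) (x0 : T) (ys : seq T) v :
  List.In v ys -> exists j : 'I_(size ys), nth x0 ys j = v.
Proof.
induction ys as [|y ys IH]; simpl; [contradiction|].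
intros [<-|H].
- exists (@ord0 (size ys)). reflexivity.
- destruct (IH H) as [j Hj]. exists (@Ordinal (size ys).+1 j.+1 (ltn_ord j)). exact Hj.
Qed.

Lemma Sim_eq : Sim q (fun x y => x = y).
Proof.
split; [split; eauto|split].
- intros r a b Hab. assert (E : a = b) by (apply functional_extensionality; exact Hab).
  now subst.
- intros Q R S _ _ Hrel. apply qext. intros i a. apply Hrel. intro j; reflexivity.
Qed.

Lemma approx_refl a : approx (Sim q) a a.
Proof. intros k c. exists (fun x y => x = y). split; [apply Sim_eq|split; [reflexivity|intro j; reflexivity]]. Qed.

Lemma approx_simq a b : approx (Sim q) a b -> simq q a b.
Proof.
intros Hab V phi x ys Hfree s s' Hs Hs' Hag.
destruct (Hab (size ys) (fun j => s (nth x ys j))) as [pi [Hpi [Hpab Hc]]].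
destruct (choice_fun (proj1 (proj1 Hpi))) as [f Hf].
pose s2 := fun v => if excluded_middle_informative (v = x) then b
  else if excluded_middle_informative (List.In v ys) then s v else f (s v).
transitivity (sat phi s2).
- apply (FP Hpi). intro v. rewrite /s2.
  destruct (excluded_middle_informative (v = x)) as [->|n]; [rewrite Hs; exact Hpab|].
  destruct (excluded_middle_informative (List.In v ys)) as [Hi|Hi]; [|apply Hf].
  destruct (In_nth' x Hi) as [j Hj]. simpl. rewrite -Hj. exact (Hc j).
- apply FV. intros v Hv. rewrite /s2.
  destruct (excluded_middle_informative (v = x)) as [->|n]; [by rewrite Hs'|].
  destruct (excluded_middle_informative (List.In v ys)) as [Hi|Hi]; [by apply Hag|].
  destruct (Hfree v Hv); contradiction.
Qed.

End S.

Theorem lemma16 (Omega : Type) (q : ops Omega) : full_monoid (Sim q).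
Proof.
split; [|split; [|split]].
- intros pi rho Hpi Hrho. split; [|split].
  + split.
    * intro a. destruct (proj1 (proj1 Hpi) a) as [b Hb].
      destruct (proj1 (proj1 Hrho) b) as [c Hc]. exists c, b; auto.
    * intro c. destruct (proj2 (proj1 Hrho) c) as [b Hb].
      destruct (proj2 (proj1 Hpi) b) as [a Ha]. exists a, b; auto.
  + intros r a c Hac.
    pose bt := fun j => proj1_sig (constructive_indefinite_description _ (Hac j)).
    have Hb := fun j => proj2_sig (constructive_indefinite_description _ (Hac j)).
    transitivity (rel_int bt).
    * apply (proj1 (proj2 Hpi) r). intro j. exact (proj1 (Hb j)).
    * apply (proj1 (proj2 Hrho) r). intro j. exact (proj2 (Hb j)).
  + intros Q R S HR HS Hrel.
    destruct (choice_fun (P := fun b a => pi a b) (proj2 (proj1 Hpi))) as [g Hg].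
    pose T : qarg Omega (qf_ty Q) := fun i b => exists a, tuprel pi a b /\ R i a.
    assert (HT : forall i, Defs.invariant (simq q) (T i)).
    { intros i b b' Hbb; split.
      - intros [a [Hab HRa]]. exists (fun j => g (b' j)). split; [intro j; apply Hg|].
        apply (proj1 (HR i a _ (fun j => claimB Hpi (Hab j) (Hg (b' j)) (Hbb j)))). exact HRa.
      - intros [a [Hab HRa]]. exists (fun j => g (b j)). split; [intro j; apply Hg|].
        apply (proj1 (HR i a _ (fun j => claimB Hpi (Hab j) (Hg (b j)) (simq_sym (Hbb j))))).
        exact HRa. }
    transitivity (qf_int T).
    * apply (proj2 (proj2 Hpi) Q R T HR HT). intros i a b Hab; split.
      -- intro HRa; exists a; auto.
      -- intros [a' [Ha'b HRa']].
         apply (proj1 (HR i a' a (fun j => claimB Hpi (Ha'b j) (Hab j) (@simq_refl _ q _)))).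
         exact HRa'.
    * apply (proj2 (proj2 Hrho) Q T S HT HS). intros i b c Hbc; split.
      -- intros [a [Hab HRa]]. apply (proj1 (Hrel i a c (fun j => ex_intro _ (b j) (conj (Hab j) (Hbc j))))).
         exact HRa.
      -- intro HSc. exists (fun j => g (b j)). split; [intro j; apply Hg|].
         apply (proj2 (Hrel i _ c (fun j => ex_intro _ (b j) (conj (Hg (b j)) (Hbc j))))).
         exact HSc.
- intros pi Hpi. split; [|split].
  + split.
    * intro a. destruct (proj2 (proj1 Hpi) a) as [b Hb]. exists b; exact Hb.
    * intro b. destruct (proj1 (proj1 Hpi) b) as [a Ha]. exists a; exact Ha.
  + intros r a b Hab. symmetry. apply (proj1 (proj2 Hpi) r b a Hab).
  + intros Q R S HR HS Hrel. symmetry. apply (proj2 (proj2 Hpi) Q S R HS HR).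
    intros i a b Hab. symmetry. apply (Hrel i b a Hab).
- split; [|split].
  + split; intro a; exists a; apply approx_refl.
  + intros r a b Hab. apply rel_simq. intro j. apply approx_simq, Hab.
  + intros Q R S _ _ Hrel. apply qext. intros i a. apply Hrel. intro j; apply approx_refl.
- intros pi pi' Hpi Hsim Hsub. split; [exact Hsim|split].
  + intros r a b Hab. apply (proj1 (proj2 Hpi) r). intro j. apply Hsub, Hab.
  + intros Q R S HR HS Hrel. apply (proj2 (proj2 Hpi) Q R S HR HS).
    intros i a b Hab.
    destruct (choice_fun (P := fun b a => pi' a b) (proj2 Hsim)) as [g Hg].
    transitivity (R i (fun j => g (b j))).
    * apply (HR i). intro j. apply (claimB Hpi (Hab j) (Hsub _ _ (Hg (b j))) (@simq_refl _ q _)).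
    * apply (Hrel i). intro j. apply Hg.
Qed.
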